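(* Let $k\ge 2$ and $n\ge 1$ be integers, let $\bar{\mathcal{P}}=(\bar p_{i_1\dots i_k})\in\mathbb{R}^{[k,n]}$ be a columnwise-substochastic tensor, let $\mathbf{v}\in\mathbb{R}^n$ be a stochastic vector and let $\alpha\in[0,1)$. If the MLPPR system $(\mathbf{e}^T\mathbf{y})^{k-2}\mathbf{y}-\alpha\bar{\mathcal{P}}\mathbf{y}^{k-1}=\mathbf{v}$ has a nonnegative solution $\mathbf{y}_*\in\mathbb{R}^n_+$, then $\mathbf{y}_*$ belongs to the set $\Delta:=\{\mathbf{y}\in\mathbb{R}^n_+ : \mathbf{y}^T\mathbf{e}\le \varrho\}$, where $\varrho:=(1-\alpha)^{-\frac{1}{k-1}}$, and $\Delta$ is a bounded, closed and convex set.
   Context: $\mathbb{R}^{[k,n]}$ denotes the space of real tensors of order $k$ and dimension $n$ (indices $i_1,\dots,i_k\in\{1,\dots,n\}$). For $\mathcal{P}\in\mathbb{R}^{[k,n]}$ and $\mathbf{y}\in\mathbb{R}^n$, $\mathcal{P}\mathbf{y}^{k-1}\in\mathbb{R}^n$ is the vector with entries $(\mathcal{P}\mathbf{y}^{k-1})_i=\sum_{i_2,\dots,i_k=1}^n p_{i i_2\dots i_k}y_{i_2}\cdots y_{i_k}$. A tensor $\bar{\mathcal{P}}$ is columnwise-substochastic if all its entries are nonnegative and $\sum_{i=1}^n \bar p_{i i_2\dots i_k}\le 1$ for all $i_2,\dots,i_k$. $\mathbf{e}\in\mathbb{R}^n$ is the all-ones vector; a stochastic vector is a nonnegative vector whose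 entries sum to $1$. The MLPPR system is usually written $(I\circ\mathbf{e}^{\circ(k-2)}-\alpha\bar{\mathcal{P}})\mathbf{y}^{k-1}=\mathbf{v}$, where $I\circ\mathbf{e}^{\circ(k-2)}$ is the tensor with entries $\delta_{i_1i_2}$ (outer product of the identity matrix with $k-2$ copies of $\mathbf{e}$), so that $(I\circ\mathbf{e}^{\circ(k-2)})\mathbf{y}^{k-1}=(\mathbf{e}^T\mathbf{y})^{k-2}\mathbf{y}$. *)

(* Defs.v *)
From HB Require Import structures.
From mathcomp Require Import all_boot all_order all_algebra.
From mathcomp Require Import all_classical all_reals all_analysis.
Set Implicit Arguments. Unset Strict Implicit. Unset Printing Implicit Defensive.
Import Order.TTheory GRing.Theory Num.Theory.
Import numFieldNormedType.Exports.
Local Open Scope ring_scope.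

(* A real tensor of order k and dimension n: entries P i f, where i is the
   first index i_1 and f : {ffun 'I_(k-1) -> 'I_n} lists (i_2, ..., i_k). *)
Definition tensor (R : Type) (k n : nat) := 'I_n -> {ffun 'I_k.-1 -> 'I_n} -> R.

Definition tapply (R : realType) (k n : nat) (P : tensor R k n) (y : 'rV[R]_n)
  : 'rV[R]_n :=
  \row_i \sum_(f : {ffun 'I_k.-1 -> 'I_n}) P i f * \prod_(j < k.-1) y ord0 (f j).

Definition columnwise_substochastic (R : realType) (k n : nat) (P : tensor R k n) :=
  (forall i f, 0 <= P i f) /\ (forall f, \sum_(i < n) P i f <= 1).

Definition nonneg_vec (R : realType) (n : nat) (y : 'rV[R]_n) :=
  forall i, 0 <= y ord0 i.

Definition stochastic_vec (R : realType) (n : nat) (v : 'rV[R]_n) :=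
  nonneg_vec v /\ \sum_(i < n) v ord0 i = 1.

Definition esum (R : realType) (n : nat) (y : 'rV[R]_n) := \sum_(i < n) y ord0 i.

Definition mlppr_solution (R : realType) (k n : nat) (alpha : R)
  (P : tensor R k n) (v y : 'rV[R]_n) :=
  (esum y) ^+ (k - 2) *: y - alpha *: tapply P y = v.

Definition varrho (R : realType) (k : nat) (alpha : R) : R :=
  powR (1 - alpha) (- (k.-1%:R)^-1).

Definition Delta (R : realType) (k n : nat) (alpha : R) : set 'rV[R]_n :=
  [set y | nonneg_vec y /\ esum y <= varrho k alpha].

(* Main.v *)
Require Import Defs.
From HB Require Import structures.
From mathcomp Require Import all_boot all_order all_algebra.
From mathcomp Require Import all_classical all_reals all_analysis.
From mathcomp Require Import lra.
Import Order.TTheory GRing.Theory Num.Theory.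
Import numFieldNormedType.Exports.
Local Open Scope ring_scope.
Local Open Scope classical_set_scope.

Lemma esum_bound (R : realType) (k n : nat) (hk : (2 <= k)%N)
  (P : tensor R k n) (v : 'rV[R]_n) (alpha : R)
  (hP : columnwise_substochastic P) (hv : stochastic_vec v)
  (ha0 : 0 <= alpha) (ha1 : alpha < 1)
  (y : 'rV[R]_n) (hy0 : nonneg_vec y) (hsol : mlppr_solution alpha P v y) :
  (1 - alpha) * Defs.esum y ^+ k.-1 <= 1.
Proof.
have s0 : 0 <= Defs.esum y by apply: sumr_ge0 => i _; exact: hy0.
have hsum := congr1 (fun w : 'rV[R]_n => \sum_(i < n) w ord0 i) hsol.
rewrite /= hv.2 in hsum.
have kk : (k - 2).+1 = k.-1 by clear -hk; case: k hk => [|[|k]] //=; rewrite subn2.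
have T : \sum_(i < n) (tapply P y) ord0 i <= Defs.esum y ^+ k.-1.
  rewrite /tapply.
  under eq_bigr do rewrite mxE.
  rewrite exchange_big /=.
  have -> : Defs.esum y ^+ k.-1 = \prod_(j < k.-1) \sum_(i < n) y ord0 i.
    by rewrite prodr_const card_ord.
  rewrite bigA_distr_bigA /=.
  apply: ler_sum => f _.
  rewrite -mulr_suml.
  apply: ler_piMl; first by apply: prodr_ge0 => j _; exact: hy0.
  exact: hP.2.
have E : \sum_(i < n) (Defs.esum y ^+ (k - 2) *: y - alpha *: tapply P y) ord0 i
   = Defs.esum y ^+ (k - 2) * Defs.esum y - alpha * \sum_(i < n) (tapply P y) ord0 i.
  rewrite /Defs.esum mulr_sumr mulr_sumr -sumrB; apply: eq_bigr => i _.
  by rewrite !mxE.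
rewrite E in hsum.
rewrite -exprSr kk in hsum.
move: T; rewrite -/(Defs.esum y) in hsum *.
set S := \sum_(i < n) _.
move=> T.
have : alpha * S <= alpha * Defs.esum y ^+ k.-1 by apply: ler_wpM2l.
move: hsum; set Z := Defs.esum y ^+ k.-1. move=> hs hh. have hs2 : Z - alpha * S = 1 by exact: hs. clear -hs2 hh. nra.
Qed.

Lemma le_varrho (R : realType) (m : nat) (hm : (0 < m)%N) (c s : R)
  (c0 : 0 < c) (s0 : 0 <= s) (h : c * s ^+ m <= 1) :
  s <= powR c (- (m%:R)^-1).
Proof.
rewrite powRN.
have q0 : 0 < powR c (m%:R^-1) by apply: powR_gt0.
rewrite -(ler_pM2r q0) mulVf ?gt_eqF //.
have -> : s = powR (s ^+ m) (m%:R^-1).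
  rewrite -powR_mulrn // -powRrM mulfV ?powRr1 // pnatr_eq0 -lt0n //.
rewrite -powRM ?exprn_ge0 //; last exact: ltW.
apply: (@le_trans _ _ (powR 1 (m%:R^-1))); last by rewrite powR1.
apply: ge0_ler_powR; rewrite ?nnegrE ?invr_ge0 ?ler0n //.
  by apply: mulr_ge0; [exact: exprn_ge0 | exact: ltW].
by rewrite mulrC.
Qed.

Lemma sum_cont (R : realType) (n : nat) (r : seq 'I_n) :
  continuous (fun y : 'rV[R]_n => \sum_(i <- r) y ord0 i).
Proof.
elim: r => [|i r IH].
  under eq_fun do rewrite big_nil. exact: cst_continuous.
under eq_fun do rewrite big_cons.
move=> y; apply: continuousD; last exact: IH.
exact: coord_continuous.
Qed.

Lemma esum_cont (R : realType) (n : nat) :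
  continuous (fun y : 'rV[R]_n => Defs.esum y).
Proof. exact: sum_cont. Qed.

Lemma coord_le_esum (R : realType) (n : nat) (y : 'rV[R]_n) (hy : nonneg_vec y) j :
  y ord0 j <= Defs.esum y.
Proof.
rewrite /Defs.esum (bigD1 j) //= lerDl; apply: sumr_ge0 => i _; exact: hy.
Qed.

Theorem lemma3p4 (R : realType) (k n : nat) (hk : (2 <= k)%N) (hn : (1 <= n)%N)
  (P : tensor R k n) (v : 'rV[R]_n) (alpha : R)
  (hP : columnwise_substochastic P) (hv : stochastic_vec v)
  (ha0 : 0 <= alpha) (ha1 : alpha < 1)
  (ystar : 'rV[R]_n) (hy0 : nonneg_vec ystar) (hsol : mlppr_solution alpha P v ystar) :
  (@Delta R k n alpha) ystar /\
  bounded_set ((@Delta R k n alpha)) /\ closed ((@Delta R k n alpha)) /\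
  convex_set ((@Delta R k n alpha) : set (convex_lmodType 'rV[R]_n)).
Proof.
split.
  split => //; rewrite /varrho.
  apply: le_varrho; first by clear -hk; case: k hk => [|[|k]].
  - by rewrite subr_gt0.
  - by apply: sumr_ge0 => i _; exact: hy0.
  - exact: (@esum_bound R k n hk P v alpha hP hv ha0 ha1 ystar hy0 hsol).
split.
  exists (varrho k alpha); split; first exact: num_real.
  move=> x hx y [hy hs] /=.
  apply: ltW; apply: le_lt_trans hx.
  rewrite [leLHS]/Num.Def.normr /= mx_normrE.
  apply: bigmax_le; first exact: powR_ge0.
  move=> [a b] _ /=; rewrite (_ : a = ord0); last by apply: ord_inj; case: a => -[].
  rewrite ger0_norm ?hy //.
  exact: le_trans (@coord_le_esum _ _ y hy b) hs.
split.
  have -> : @Delta R k n alpha = \bigcap_(i in [set: 'I_n]) [set y : 'rV[R]_n | 0 <= y ord0 i]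
     `&` ((fun y : 'rV[R]_n => Defs.esum y) @^-1` [set x | x <= varrho k alpha]).
    apply/seteqP; split => y /=.
      by move=> [h1 h2]; split => // i _; exact: h1.
    by move=> [h1 h2]; split => // i; exact: h1.
  apply: closedI.
    apply: closed_bigI => i _.
    apply: (@preimage_closed _ _ (fun y : 'rV[R]_n => y ord0 i) [set x : R | 0 <= x]).
      by move=> y _; exact: coord_continuous.
    exact: closed_ge.
  apply: preimage_closed; last exact: closed_le.
  by move=> y _; exact: esum_cont.
move=> x y l; rewrite !inE => -[hx sx] [hy sy].
have -> : conv l x y = (l%:inum *: (x : 'rV[R]_n) + (1 - l%:inum) *: (y : 'rV[R]_n)) by [].
have l0 : 0 <= l%:inum by [].
have l1 : 0 <= (1 - l%:inum) by rewrite subr_ge0.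
split.
  move=> i; rewrite !mxE.
  by apply: addr_ge0; apply: mulr_ge0; rewrite ?hx ?hy.
have -> : Defs.esum (l%:inum *: (x : 'rV[R]_n) + (1 - l%:inum) *: (y : 'rV[R]_n))
   = l%:inum * Defs.esum x + (1 - l%:inum) * Defs.esum y.
  rewrite /Defs.esum !mulr_sumr -big_split /=; apply: eq_bigr => i _.
  by rewrite !mxE.
apply: (@le_trans _ _ (l%:inum * varrho k alpha + (1 - l%:inum) * varrho k alpha)).
  by apply: lerD; apply: ler_wpM2l.
by rewrite -mulrDl addrC subrK mul1r.
Qed.
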